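(* Let $\mathcal{C}_0$ be a linear code of length $\ell$ over a finite field $S$ with $|S|=s$, let $q$ be a power of a prime $p$, let $\mathcal{C}=\mathrm{IC}_q(\mathcal{C}_0)$, and let $n=\ell s$ be its length. If $\mathcal{C}_0$ is $p$-divisible, then $$\mathcal{C}^\perp\cap\mathcal{P}\subseteq\mathcal{C},$$ where $\mathcal{P}=\{c\in\mathbb{F}_q^n:\sum_i c_i=0\}$ is the parity-check code of length $n$; in particular $\dim\mathcal{C}\ge\frac{n-1}{2}$. If moreover $p\mid\ell$, then $\mathcal{C}^\perp\subseteq\mathcal{C}$ and $\dim\mathcal{C}\ge\frac n2$.
   Context: A linear code is $p$-divisible if $p$ divides the Hamming weight of each of its codewords. For a code $\mathcal{C}_0\subseteq S^\ell$, its incidence code over $\mathbb{F}_q$ is $\mathrm{IC}_q(\mathcal{C}_0)=\{u\in\mathbb{F}_q^{S\times[1,\ell]}:\ \sum_{i=1}^\ell u_{(c_i,i)}=0\ \text{for all } c\in\mathcal{C}_0\}$, i.e. the code with parity-check matrix $M$, where $M$ has rows indexed by $c\in\mathcal{C}_0$, columns indexed by $(\alpha,i)\in S\times[1,\ell]$, and $M[c,(\alpha,i)]=1$ iff $c_i=\alpha$. $\mathcal{C}^\perp$ denotes the dual code (here the row space of $M$ over $\mathbb{F}_q$). *)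

(* Defs.v *)
From HB Require Import structures.
From mathcomp Require Import all_boot all_order all_algebra.
Set Implicit Arguments. Unset Strict Implicit. Unset Printing Implicit Defensive.
Import GRing.Theory.
Local Open Scope ring_scope.

(* Words over F_q indexed by coordinates S x [1,l]; we use F^o so that the
   type of words is canonically an F-vector space (vectType). *)
Definition word (F : finFieldType) (S : finType) (l : nat) :=
  {ffun S * 'I_l -> F^o}.

Definition hweight (S : fieldType) (l : nat) (c : 'rV[S]_l) : nat :=
  #|[set i : 'I_l | c 0 i != 0]|.

Definition pdivisible (S : fieldType) (l : nat) (p : nat) (C0 : {vspace 'rV[S]_l}) :=
  forall c : 'rV[S]_l, c \in C0 -> (p %| hweight c)%N.

Definition IC (F : finFieldType) (S : finFieldType) (l : nat) (C0 : {vspace 'rV[S]_l})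
  : {set word F S l} :=
  [set u : word F S l | [forall c : 'rV[S]_l, (c \in C0) ==>
                            (\sum_(i < l) u (c 0 i, i) == 0)]].

Definition dotw (F : finFieldType) (S : finType) (l : nat) (u v : word F S l) : F :=
  \sum_x (u x : F) * (v x : F).

Definition dual (F : finFieldType) (S : finType) (l : nat) (C : {set word F S l})
  : {set word F S l} :=
  [set v | [forall u in C, dotw u v == 0]].

Definition parity (F : finFieldType) (S : finType) (l : nat) : {set word F S l} :=
  [set v : word F S l | \sum_x (v x : F) == 0].

Definition cdim (F : finFieldType) (S : finType) (l : nat) (C : {set word F S l}) : nat :=
  \dim (span (enum C)).

(* Main.v *)
Require Import Defs.
From HB Require Import structures.
From mathcomp Require Import all_boot all_order all_algebra all_field.
From mathcomp Require Import zify.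
Import GRing.Theory.
Set Implicit Arguments. Unset Strict Implicit.
Local Open Scope ring_scope.

Definition dotmap (F : finFieldType) (S : finType) (l : nat) (ws : seq (word F S l))
  (v : word F S l) : {ffun 'I_(size ws) -> F^o} := [ffun i : 'I_(size ws) => dotw ws`_i v].

Fact dotmap_linear (F : finFieldType) (S : finType) (l : nat) (ws : seq (word F S l)) :
  linear (dotmap ws).
Proof.
move=> a u v; apply/ffunP=> i; rewrite !ffunE /dotw.
rewrite scaler_sumr -big_split; apply: eq_bigr => x _ /=.
by rewrite !ffunE /= mulrDr mulrCA.
Qed.

HB.instance Definition _ (F : finFieldType) (S : finType) (l : nat) (ws : seq (word F S l)) :=
  GRing.isLinear.Build F (word F S l) _ _ (dotmap ws) (dotmap_linear ws).

Lemma dimF (F : finFieldType) : \dim {: F^o} = 1%N.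
Proof. by rewrite dimvf /dim. Qed.

Lemma ker_bound (F : finFieldType) (S : finType) (l : nat) (ws : seq (word F S l)) :
  exists U : {vspace word F S l}, (\dim {:word F S l} <= \dim U + size ws)%N /\
    forall v, v \in U -> forall w, w \in ws -> dotw w v = 0.
Proof.
exists (lker (linfun (dotmap ws))); split.
  have := limg_ker_dim (linfun (dotmap ws)) fullv.
  rewrite capfv => <-; rewrite leq_add2l.
  apply: leq_trans (dimvS (subvf _)) _.
  by rewrite dimvf /dim /= card_ord muln1.
move=> v; rewrite memv_ker lfunE /= => /eqP hv w /(nthP 0) [i hi <-].
have := congr1 (fun f : {ffun _ -> _} => f (Ordinal hi)) hv.
by rewrite !ffunE.
Qed.
Definition chi (F : finFieldType) (S : finType) (l : nat) (c : 'rV[S]_l) : word F S l :=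
  [ffun x => ((c 0 x.2 == x.1) : nat)%:R].

Definition onew (F : finFieldType) (S : finType) (l : nat) : word F S l := [ffun => 1].

Lemma dotw_chi (F : finFieldType) (S : finType) (l : nat) (c : 'rV[S]_l) (v : word F S l) :
  dotw (chi F c) v = \sum_(i < l) (v (c 0 i, i) : F).
Proof.
rewrite /dotw.
transitivity (\sum_(a : S) \sum_(i < l) (chi F c (a, i) : F) * v (a, i)).
  by rewrite pair_big; apply: eq_big => // -[a i].
rewrite exchange_big /=; apply: eq_bigr => i _.
rewrite (bigD1 (c 0 i)) //= ffunE /= eqxx mul1r big1 ?addr0 // => a /negbTE ne.
by rewrite ffunE /= eq_sym ne mul0r.
Qed.

Lemma dotw_one (F : finFieldType) (S : finType) (l : nat) (v : word F S l) :
  dotw (onew F S l) v = \sum_x (v x : F).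
Proof. by apply: eq_bigr => x _; rewrite ffunE mul1r. Qed.

Lemma dotwBl (F : finFieldType) (S : finType) (l : nat) (u w v : word F S l) :
  dotw (u - w) v = dotw u v - dotw w v.
Proof.
rewrite /dotw -sumrB; apply: eq_bigr => x _.
by rewrite !ffunE mulrBl.
Qed.

Lemma dotwDZr (F : finFieldType) (S : finType) (l : nat) (a : F) (u x y : word F S l) :
  dotw u (a *: x + y) = a * dotw u x + dotw u y.
Proof.
rewrite /dotw mulr_sumr -big_split; apply: eq_bigr => z _ /=.
by rewrite !ffunE /= mulrDr mulrCA.
Qed.

Lemma dotw_suml (F : finFieldType) (S : finType) (l : nat) (I : Type) (r : seq I)
   (P : pred I) (f : I -> F) (u : I -> word F S l) v :
  dotw (\sum_(i <- r | P i) f i *: u i) v = \sum_(i <- r | P i) f i * dotw (u i) v.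
Proof.
elim/big_rec2: _ => [|i y1 y2 _ <-]; first by rewrite /dotw big1 // => x _; rewrite ffunE mul0r.
rewrite /dotw mulr_sumr -big_split; apply: eq_bigr => z _ /=.
by rewrite !ffunE /= mulrDl mulrA.
Qed.

Lemma span_closed (F : finFieldType) (S : finType) (l : nat) (A : {set word F S l}) :
  0 \in A -> (forall a x y, x \in A -> y \in A -> a *: x + y \in A) ->
  forall x, (x \in <<enum A>>%VS) = (x \in A).
Proof.
move=> A0 Acl x; apply/idP/idP; last by move=> xA; apply: memv_span; rewrite mem_enum.
move=> xin; have -> := @coord_span _ _ _ (in_tuple (enum A)) x xin.
apply: (big_ind (fun y => y \in A)) => //.
  by move=> y z yA zA; rewrite -[y]scale1r Acl.
move=> i _; rewrite -[_ *: _]addr0 Acl //.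
by rewrite -mem_enum; apply: mem_nth; exact: ltn_ord.
Qed.

Lemma agree_wt (S : fieldType) (l : nat) (c c' : 'rV[S]_l) :
  (#|[set i : 'I_l | c 0%R i == c' 0%R i]| + hweight (c - c'))%N = l.
Proof.
rewrite /hweight -[X in _ = X]card_ord -(cardsC [set i : 'I_l | c 0%R i == c' 0%R i]).
congr (_ + _)%N; apply: eq_card => i; by rewrite !inE !mxE subr_eq0.
Qed.

Lemma sum_chi (F : finFieldType) (S : finType) (l : nat) (c c' : 'rV[S]_l) :
  \sum_(i < l) (chi F c (c' 0 i, i) : F) = (#|[set i : 'I_l | c 0%R i == c' 0%R i]|)%:R.
Proof.
rewrite -sum1_card natr_sum [RHS]big_mkcond /=; apply: eq_bigr => i _.
by rewrite ffunE inE /=; case: eqP.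
Qed.

Theorem mainTheorem14 (S : finFieldType) (l : nat) (C0 : {vspace 'rV[S]_l})
  (F : finFieldType) (p k : nat) (hp : prime p) (hk : (0 < k)%N)
  (hq : #|F| = (p ^ k)%N) :
  let C := IC F C0 in
  let n := (l * #|S|)%N in
  pdivisible p C0 ->
  [/\ dual C :&: parity F S l \subset C,
      (n - 1 <= 2 * cdim C)%N &
      ((p %| l)%N -> dual C \subset C /\ (n <= 2 * cdim C)%N)].
Proof.
move=> C n hdiv.
have hch : p \in [char F] := card_finPcharP hq hp.
have wt0 : forall c, c \in C0 -> (hweight c)%:R = 0 :> F.
  by move=> c /hdiv; rewrite (dvdn_pcharf hch) => /eqP.
have key : forall c, c \in C0 -> chi F c - onew F S l \in C.
  move=> c cC; rewrite inE; apply/forallP => c'; apply/implyP => c'C.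
  rewrite (eq_bigr (fun i => (chi F c (c' 0 i, i) : F) - 1)); last first.
    by move=> i _; rewrite !ffunE.
  rewrite sumrB sum_chi sumr_const card_ord.
  have -> : (l%:R : F) = (#|[set i : 'I_l | c 0%R i == c' 0%R i]| + hweight (c - c'))%:R.
    by rewrite agree_wt.
  by rewrite natrD wt0 ?addr0 ?subrr // memvB.
have keyl : (p %| l)%N -> forall c, c \in C0 -> chi F c \in C.
  move=> pl c cC; rewrite inE; apply/forallP => c'; apply/implyP => c'C.
  rewrite sum_chi; have := agree_wt c c'.
  move/(congr1 (fun m => m%:R : F)); rewrite natrD wt0 ?memvB // addr0 => ->.
  by rewrite -(dvdn_pcharf hch).
have part1 : dual C :&: parity F S l \subset C.
  apply/subsetP => v; rewrite inE => /andP [vD vP].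
  rewrite inE; apply/forallP => c; apply/implyP => cC.
  rewrite -dotw_chi; move: vD; rewrite inE => /forall_inP vD.
  have := vD _ (key c cC); rewrite dotwBl dotw_one.
  by move: vP; rewrite inE => /eqP ->; rewrite subr0.
have part3 : (p %| l)%N -> dual C \subset C.
  move=> pl; apply/subsetP => v; rewrite inE => /forall_inP vD.
  rewrite inE; apply/forallP => c; apply/implyP => cC.
  by rewrite -dotw_chi; apply: vD; apply: keyl.
have C0in : (0 : word F S l) \in C.
  rewrite inE; apply/forallP => c; apply/implyP => _.
  by rewrite big1 // => i _; rewrite ffunE.
have Ccl : forall a x y, x \in C -> y \in C -> a *: x + y \in C.
  move=> a x y; rewrite !inE => /forallP hx /forallP hy.
  apply/forallP => c; apply/implyP => cC.
  rewrite (eq_bigr (fun i => a * (x (c 0 i, i) : F) + y (c 0 i, i))); last first.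
    by move=> i _; rewrite !ffunE.
  rewrite big_split /= -mulr_sumr.
  by rewrite (eqP (implyP (hx c) cC)) (eqP (implyP (hy c) cC)) mulr0 addr0.
set VC := <<enum C>>%VS.
have hVC : forall x, (x \in VC) = (x \in C) := span_closed C0in Ccl.
have [U [hU hUo]] := ker_bound (vbasis VC).
have [W [hW hWo]] := ker_bound [:: onew F S l].
have UD : forall v, v \in U -> v \in dual C.
  move=> v vU; rewrite inE; apply/forall_inP => u uC.
  have uV : u \in VC by rewrite hVC.
  rewrite (coord_vbasis uV) dotw_suml big1 // => i _.
  by rewrite hUo ?mulr0 // mem_nth // size_tuple.
have WP : forall v, v \in W -> v \in parity F S l.
  move=> v vW; rewrite inE -dotw_one; apply/eqP; apply: hWo => //.
  by rewrite inE.
have hN : \dim {:word F S l} = n.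
  by rewrite dimvf /dim /= card_prod card_ord muln1 mulnC.
rewrite size_tuple hN in hU; rewrite hN /= in hW.
have hsum := dimv_sum_cap U W.
have hsumN : (\dim (U + W) <= n)%N by rewrite -hN dimvS // subvf.
have hcap : (\dim (U :&: W) <= \dim VC)%N.
  apply: dimvS; apply/subvP => x; rewrite memv_cap => /andP [xU xW].
  by rewrite hVC (subsetP part1) // inE UD // WP.
split => //.
  rewrite /cdim -/VC; lia.
move=> pl; split; first exact: part3.
have : (\dim U <= \dim VC)%N.
  apply: dimvS; apply/subvP => x xU.
  by rewrite hVC (subsetP (part3 pl)) // UD.
rewrite /cdim -/VC; lia.
Qed.
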